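(* Let $A$ be a partially ordered set, $G$ a passable composite game over $A$, and $a\in A$. If every left option $G^L$ of $G$ satisfies $G^L\le [a]$, then $G\le [a]$.
   Context: Games over a poset $A$ are defined inductively: for each $a\in A$ there is an atomic game $[a]$, which has no options; and if $L$ and $R$ are non-empty sets of games, then $\{L\mid R\}$ is a composite game with left options $L$ and right options $R$. The relations $\le$ and $\lhd$ are defined by simultaneous recursion: $G\le H$ iff (1) every left option $G^L$ of $G$ satisfies $G^L\lhd H$, (2) every right option $H^R$ of $H$ satisfies $G\lhd H^R$, and (3) if $G$ or $H$ is atomic then $G\lhd H$; and $G\lhd H$ iff (1) some right option $G^R$ of $G$ satisfies $G^R\le H$, or (2) some left option $H^L$ of $H$ satisfies $G\le H^L$, or (3) $G=[a]$, $H=[b]$ are atomic and $a\le b$. A game $G$ is passable if $G\lhd G$ and recursively all its options are passable. *)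

(* Defs.v *)
From mathcomp Require Import all_boot all_order.
Set Implicit Arguments. Unset Strict Implicit. Unset Printing Implicit Defensive.
Import Order.TTheory.

(* Games over a poset A.  A composite game {L | R} has its (non-empty) sets of
   left and right options given as families indexed by (inhabited) types. *)
Inductive game (d : Order.disp_t) (A : porderType d) : Type :=
| Atom : A -> game A
| Comp : forall (IL : Type) (L : IL -> game A) (IR : Type) (R : IR -> game A),
    inhabited IL -> inhabited IR -> game A.

Arguments Atom {d A} a.
Arguments Comp {d A IL} L {IR} R _ _.

Section Games.
Context {d : Order.disp_t} {A : porderType d}.

Definition is_atom (G : game A) : Prop :=
  match G with Atom _ => True | Comp _ _ _ _ _ _ => False end.

Definition is_composite (G : game A) : Prop :=
  match G with Atom _ => False | Comp _ _ _ _ _ _ => True end.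

Definition left_option (GL G : game A) : Prop :=
  match G with
  | Atom _ => False
  | Comp _ L _ _ _ _ => exists i, L i = GL
  end.

(* Simultaneous recursion: rel G H = (G <= H, G <| H). *)
Fixpoint rel (G : game A) : game A -> Prop * Prop :=
  fix relH (H : game A) : Prop * Prop :=
    let lfGH :=
      (match G with
       | Comp _ _ _ R _ _ => exists i, fst (rel (R i) H)
       | Atom _ => False end)
      \/ (match H with
          | Comp _ L' _ _ _ _ => exists j, fst (relH (L' j))
          | Atom _ => False end)
      \/ (match G, H with
          | Atom a, Atom b => (a <= b)%O
          | _, _ => False end) in
    let leGH :=
      [/\ (match G with
           | Comp _ L _ _ _ _ => forall i, snd (rel (L i) H)
           | Atom _ => True end),
          (match H with
           | Comp _ _ _ R' _ _ => forall j, snd (relH (R' j))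
           | Atom _ => True end)
        & (is_atom G \/ is_atom H -> lfGH)] in
    (leGH, lfGH).

Definition game_le (G H : game A) : Prop := fst (rel G H).
Definition game_lf (G H : game A) : Prop := snd (rel G H).

Fixpoint passable (G : game A) : Prop :=
  game_lf G G /\
  match G with
  | Atom _ => True
  | Comp _ L _ R _ _ => (forall i, passable (L i)) /\ (forall j, passable (R j))
  end.

End Games.

(* Main.v *)
Require Import Defs.
From mathcomp Require Import all_boot all_order.
Section S.
Context {d : Order.disp_t} {A : porderType d}.
Set Implicit Arguments. Unset Strict Implicit.

Lemma le_eq (G H : game A) : game_le G H <->
  [/\ (match G with Comp _ L _ _ _ _ => forall i, game_lf (L i) H | Atom _ => True end),
      (match H with Comp _ _ _ R' _ _ => forall j, game_lf G (R' j) | Atom _ => True end)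
    & (is_atom G \/ is_atom H -> game_lf G H)].
Proof. by destruct G, H; exact (iff_refl _). Qed.

Lemma lf_eq (G H : game A) : game_lf G H <->
  (match G with Comp _ _ _ R _ _ => exists i, game_le (R i) H | Atom _ => False end) \/
  (match H with Comp _ L' _ _ _ _ => exists j, game_le G (L' j) | Atom _ => False end) \/
  (match G, H with Atom a, Atom b => (a <= b)%O | _, _ => False end).
Proof. by destruct G, H; exact (iff_refl _). Qed.
Definition P (X Y Z : game A) : Prop :=
  [/\ (game_le X Y -> game_lf Y Z -> game_lf X Z),
      (game_lf X Y -> game_le Y Z -> game_lf X Z)
    & (game_le X Y -> game_le Y Z -> game_le X Z)].

Lemma atom_le (x y : A) : (x <= y)%O -> game_le (Atom x) (Atom y).
Proof. move=> h; apply/le_eq; split => // _; right; right; exact h. Qed.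

Lemma le_lf_atomL (x : A) Y : game_le (Atom x) Y -> game_lf (Atom x) Y.
Proof. by case/le_eq => _ _; apply; left. Qed.
Lemma le_lf_atomR X (y : A) : game_le X (Atom y) -> game_lf X (Atom y).
Proof. by case/le_eq => _ _; apply; right. Qed.

Lemma step X Y Z :
  (match X with Comp _ L _ R _ _ =>
     (forall i Y Z, P (L i) Y Z) /\ (forall i Y Z, P (R i) Y Z) | Atom _ => True end) ->
  (match Y with Comp _ L _ R _ _ =>
     (forall i Z, P X (L i) Z) /\ (forall i Z, P X (R i) Z) | Atom _ => True end) ->
  (match Z with Comp _ L _ R _ _ =>
     (forall i, P X Y (L i)) /\ (forall i, P X Y (R i)) | Atom _ => True end) ->
  P X Y Z.
Proof.
move=> HX HY HZ.
have T2 : game_le X Y -> game_lf Y Z -> game_lf X Z.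
  move=> hXY /lf_eq [hYR | [hZL | hat]].
  - destruct Y as [y|IL L IR R h1 h2]; first done.
    case: hYR => j hj. case/le_eq: hXY => _ hr _.
    by case: (proj2 HY j Z) => _ T3 _; apply: T3.
  - destruct Z as [z|IL L IR R h1 h2]; first done.
    case: hZL => k hk. apply/lf_eq; right; left; exists k.
    by case: (proj1 HZ k) => _ _ T1; apply: T1.
  - destruct Y as [y|]; last done. destruct Z as [z|]; last done.
    have := @le_lf_atomR X y hXY => /lf_eq [hXR | [// | hat']].
    + destruct X as [x|IL L IR R h1 h2]; first done.
      case: hXR => i hi. apply/lf_eq; left; exists i.
      case: (proj2 HX i (Atom y) (Atom z)) => _ _ T1. exact: (T1 hi (@atom_le y z hat)).
    + destruct X as [x|]; last done. apply/lf_eq; right; right.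
      exact: Order.le_trans hat' hat.
have T3 : game_lf X Y -> game_le Y Z -> game_lf X Z.
  move=> /lf_eq [hXR | [hYL | hat]] hYZ.
  - destruct X as [x|IL L IR R h1 h2]; first done.
    case: hXR => i hi. apply/lf_eq; left; exists i.
    by case: (proj2 HX i Y Z) => _ _ T1; apply: T1.
  - destruct Y as [y|IL L IR R h1 h2]; first done.
    case: hYL => j hj. case/le_eq: hYZ => hl _ _.
    by case: (proj1 HY j Z) => T2' _ _; apply: T2'.
  - destruct X as [x|]; last done. destruct Y as [y|]; last done.
    exact: (T2 (atom_le hat) (le_lf_atomL hYZ)).
split => // hXY hYZ.
case/le_eq: (hXY) => hl1 hr1 ha1; case/le_eq: (hYZ) => hl2 hr2 ha2.
apply/le_eq; split.
- destruct X as [x|IL L IR R h1 h2] => // i.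
  by case: (proj1 HX i Y Z) => _ T3' _; apply: T3'.
- destruct Z as [z|IL L IR R h1 h2] => // k.
  by case: (proj2 HZ k) => T2' _ _; apply: T2'.
- case=> hat.
  + apply: T3 hYZ. by apply: ha1; left.
  + exact: (T2 hXY (ha2 (or_intror hat))).
Qed.

Lemma trans_all X Y Z : P X Y Z.
Proof.
elim: X Y Z => [x|IL L IR R h1 h2 IHL IHR] Y.
all: elim: Y => [y|JL L' JR R' k1 k2 IHL' IHR'] Z.
all: elim: Z => [z|KL L'' KR R'' m1 m2 IHL'' IHR''].
all: apply: step => //.
Qed.

Lemma game_le_refl (G : game A) : game_le G G.
Proof.
elim: G => [x|IL L IHL IR R IHR h1 h2].
  exact: atom_le.
apply/le_eq; split.
- move=> i; apply/lf_eq; right; left. exists i; exact: IHL.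
- move=> j; apply/lf_eq; left; exists j; exact: IHR.
- by case.
Qed.

Lemma T1 (X Y Z : game A) : game_le X Y -> game_le Y Z -> game_le X Z.
Proof. by case: (trans_all X Y Z). Qed.
Lemma T2 (X Y Z : game A) : game_le X Y -> game_lf Y Z -> game_lf X Z.
Proof. by case: (trans_all X Y Z). Qed.

Lemma key IL (LG : IL -> game A) IR (RG : IR -> game A) h1 h2 (a : A) :
  (forall i, game_le (LG i) (Atom a)) ->
  forall X, passable X ->
  (game_lf X (Comp LG RG h1 h2) -> game_lf X (Atom a)) /\
  (game_le X (Comp LG RG h1 h2) -> game_le X (Atom a)).
Proof.
move=> hL X; set G := Comp LG RG h1 h2.
elim: X => [x|JL L IHL JR R IHR k1 k2] hp.
- have P1 : game_lf (Atom x) G -> game_lf (Atom x) (Atom a).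
    case/lf_eq => [// | [[j hj] | //]].
    exact: le_lf_atomR (T1 hj (hL j)).
  split => // hle; apply/le_eq; split => // _.
  apply: P1; case/le_eq: hle => _ _; apply; by left.
- case: hp => hpX [hpL hpR].
  have P1 : game_lf (Comp L R k1 k2) G -> game_lf (Comp L R k1 k2) (Atom a).
    case/lf_eq => [[i hi] | [[j hj] | //]].
    + apply/lf_eq; left; exists i; exact: (proj2 (IHR i (hpR i)) hi).
    + exact: le_lf_atomR (T1 hj (hL j)).
  split => // hle; apply/le_eq; split => //.
  + move=> i; apply: (proj1 (IHL i (hpL i))).
    by case/le_eq: hle => hl _ _; apply: hl.
  + move=> _.
    case/lf_eq: hpX => [[i hi] | [[j hj] | //]].
    * apply/lf_eq; left; exists i; apply: (proj2 (IHR i (hpR i))).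
      exact: T1 hi hle.
    * apply: T2 hj _; apply: (proj1 (IHL j (hpL j))).
      by case/le_eq: hle => hl _ _; apply: hl.
Qed.
End S.

Theorem proposition6p13 (d : Order.disp_t) (A : porderType d) (G : game A) (a : A) :
  is_composite G -> passable G ->
  (forall GL, left_option GL G -> game_le GL (Atom a)) ->
  game_le G (Atom a).
Proof.
case: G => [//|IL L IR R h1 h2] _ hp hL.
have hL' : forall i, game_le (L i) (Atom a) by move=> i; apply: hL; exists i.
have K := @key d A IL L IR R h1 h2 a hL' (Comp L R h1 h2) hp.
exact: (proj2 K (game_le_refl _)).
Qed.
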